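(* Let $\Omega=\{\omega_1<\dots<\omega_{|\mathcal{X}|}\}\subset\{1,\dots,|\mathcal{Y}|\}$ with $M_\Omega$ invertible, let $A=M_{\Omega}^{-1}M(1\!:\!|\mathcal{X}|)P_{X|Y_1}^{-1}$ with columns $a_1,\dots,a_{|\mathcal{X}|}$, and let $J_u\in\mathbb{R}^{|\mathcal{X}|}$ satisfy $\sum_x|J_u(x)|\le1$. Define $V\in\mathbb{R}^{|\mathcal{Y}|}$ by $V(\omega_i)=(M_\Omega^{-1}M\begin{bmatrix}P_{X|Y_1}^{-1}J_u\\0\end{bmatrix})(i)$ for $1\le i\le|\mathcal{X}|$ and $V(j)=0$ for $j\notin\Omega$. Then $\|V\|_1\le r$, where $r=\max_i \mathbf{1}^T|a_i|$ and $|a_i|$ denotes the entrywise absolute value of $a_i$.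
   Context: Setting: $X,Y$ on finite alphabets with $|\mathcal{X}|<|\mathcal{Y}|$; $P_{X|Y}\in\mathbb{R}^{|\mathcal{X}|\times|\mathcal{Y}|}$ has full row rank and $P_{X|Y}=[P_{X|Y_1},P_{X|Y_2}]$ with $P_{X|Y_1}$ (first $|\mathcal{X}|$ columns) invertible. With an SVD $P_{X|Y}=U\Sigma V^T$, $V=[v_1,\dots,v_{|\mathcal{Y}|}]$, set $M=[v_1,\dots,v_{|\mathcal{X}|}]^T$. $M_\Omega$ is the submatrix of $M$ with columns indexed by $\Omega$, and $M(1\!:\!|\mathcal{X}|)$ the submatrix of its first $|\mathcal{X}|$ columns. The zero block has size $|\mathcal{Y}|-|\mathcal{X}|$. *)

(* Defs.v *)
From HB Require Import structures.
From mathcomp Require Import all_boot all_order all_algebra.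
Set Implicit Arguments. Unset Strict Implicit. Unset Printing Implicit Defensive.
Import Order.TTheory GRing.Theory Num.Theory.
Local Open Scope ring_scope.

Definition is_svd (R : realFieldType) (m n : nat) (P : 'M[R]_(m, n))
  (U : 'M[R]_m) (S : 'M[R]_(m, n)) (Vm : 'M[R]_n) : Prop :=
  [/\ U *m U^T = 1%:M /\ U^T *m U = 1%:M,
      Vm *m Vm^T = 1%:M /\ Vm^T *m Vm = 1%:M,
      (forall (i : 'I_m) (j : 'I_n), (i : nat) != j -> S i j = 0),
      (forall (i : 'I_m) (j : 'I_n), (i : nat) = j -> 0 <= S i j)
    & P = U *m S *m Vm^T].

Definition l1norm (R : realDomainType) (n : nat) (v : 'cV[R]_n) : R :=
  \sum_(j < n) `|v j 0|.

(* Main.v *)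
Require Import Defs.
From HB Require Import structures.
From mathcomp Require Import all_boot all_order all_algebra.
Import Order.TTheory GRing.Theory Num.Theory.
Local Open Scope ring_scope.

(* |X| = nx, |Y| = nx + k with k > 0 (so |X| < |Y|); the zero block has size k. *)
Theorem proposition7 (R : realFieldType) (nx k : nat) (hk : (0 < k)%N)
  (P : 'M[R]_(nx, nx + k))
  (hrank : \rank P = nx)
  (hP1 : lsubmx P \in unitmx)
  (U : 'M[R]_nx) (S : 'M[R]_(nx, nx + k)) (Vm : 'M[R]_(nx + k))
  (hsvd : is_svd P U S Vm)
  (M : 'M[R]_(nx, nx + k))
  (hM : forall (i : 'I_nx) (j : 'I_(nx + k)), M i j = Vm j (lshift k i))
  (w : 'I_nx -> 'I_(nx + k))
  (hw : forall i j : 'I_nx, (i < j)%N -> (w i < w j)%N)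
  (hMO : colsub w M \in unitmx)
  (Ju : 'cV[R]_nx)
  (hJ : \sum_(x < nx) `|Ju x 0| <= 1)
  (V : 'cV[R]_(nx + k))
  (hVin : forall i : 'I_nx,
     V (w i) 0 = (invmx (colsub w M) *m M
                   *m col_mx (invmx (lsubmx P) *m Ju) (0 : 'cV[R]_k)) i 0)
  (hVout : forall j : 'I_(nx + k), (forall i : 'I_nx, j != w i) -> V j 0 = 0) :
  let A := invmx (colsub w M) *m lsubmx M *m invmx (lsubmx P) in
  let r := \big[Num.max/0]_(i < nx) \sum_(j < nx) `|col i A j 0| in
  l1norm V <= r.
Proof.
Proof.
cbv zeta. set A := invmx (colsub w M) *m _ *m _. set r := \big[_/_]_(i < nx) _.
set x := A *m Ju.
have hx : forall i, V (w i) 0 = x i 0.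
  move=> i; rewrite hVin /x /A -mulmxA.
  have -> : M *m col_mx (invmx (lsubmx P) *m Ju) (0 : 'cV[R]_k)
            = lsubmx M *m (invmx (lsubmx P) *m Ju).
    by rewrite -{1}(hsubmxK M) mul_row_col mulmx0 addr0.
  by rewrite !mulmxA.
have winj : injective w.
  move=> i j hij; apply/eqP; apply: contraT; rewrite neq_ltn.
  by case/orP=> /hw; rewrite hij ltnn.
have -> : l1norm V = \sum_i `|x i 0|.
  rewrite /l1norm (bigID (fun j => j \in [set w i | i in setT])) /=.
  rewrite [X in _ + X]big1 ?addr0; last first.
    move=> j hj; rewrite hVout ?normr0 // => i; apply: contra hj => /eqP ->.
    by rewrite imset_f ?inE.
  rewrite big_imset /=; last by move=> a b _ _; apply: winj.
  by rewrite big_set /=; apply: eq_bigr => i _; rewrite hx.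
have r0 : 0 <= r by rewrite /r; apply: Order.TotalTheory.bigmax_ge_id.
have hcol : forall j, \sum_i `|A i j| <= r.
  move=> j; apply: le_trans (Order.TotalTheory.le_bigmax _ _ j).
  by apply: ler_sum => i _; rewrite [col _ _ _ _]mxE.
apply: (le_trans (y := \sum_i \sum_j `|A i j| * `|Ju j 0|)).
  apply: ler_sum => i _; rewrite /x mxE.
  by apply: le_trans (ler_norm_sum _ _ _) _; apply: ler_sum => j _; rewrite normrM.
rewrite exchange_big /=.
apply: (le_trans (y := \sum_j r * `|Ju j 0|)).
  by apply: ler_sum => j _; rewrite -mulr_suml ler_wpM2r.
by rewrite -mulr_sumr; rewrite -[leRHS]mulr1 ler_wpM2l.
Qed.
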